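(* There exist finite MDPs $\mathcal{M}_1,\mathcal{M}_2,\mathcal{M}_3$, all defined on the same state and action space, such that $d_V(\mathcal{M}_1,\mathcal{M}_3)>d_V(\mathcal{M}_1,\mathcal{M}_2)+d_V(\mathcal{M}_2,\mathcal{M}_3)$. Hence $d_V$ is not a metric in general.
   Context: A finite MDP has finite state space, finite action space, transition distribution, bounded random reward, discount $\gamma\in[0,1)$ and a single initial state $s^\circ$. $V^\pi_i$ denotes the expected discounted value at $s^\circ$ of stationary policy $\pi$ in $\mathcal{M}_i$, $V^*_i$ the optimal value and $\pi^*_i$ the optimal policy (the lexicographically first if several). For MDPs on the same state and action spaces, $d_V(\mathcal{M}_i,\mathcal{M}_j)=\max\{V_i^*-V_i^{\pi^*_j},\,V_j^*-V_j^{\pi^*_i}\}$. *)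

(* Defs.v *)
From HB Require Import structures.
From mathcomp Require Import all_boot all_order all_algebra.
From mathcomp Require Import all_classical all_reals all_analysis.
From mathcomp Require Import Rstruct Rstruct_topology.
From Stdlib Require Import Rdefinitions.
Notation R := Rdefinitions.R.
Set Implicit Arguments. Unset Strict Implicit. Unset Printing Implicit Defensive.
Import Order.TTheory GRing.Theory Num.Theory.
Local Open Scope ring_scope.
Local Open Scope classical_set_scope.

(* A finite MDP on state space S and action space A (both finite types).
   Rewards are represented by their (finite) mean r s a: the discounted value
   only depends on the mean reward. *)
Record mdp (S A : finType) := MDP {
  trans : S -> A -> S -> R;
  trans_ge0 : forall s a s', 0 <= trans s a s';
  trans_sum1 : forall s a, \sum_(s' : S) trans s a s' = 1;
  reward : S -> A -> R;
  gamma : R;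
  gamma_ge0 : 0 <= gamma;
  gamma_lt1 : gamma < 1;
  init : S
}.

Section MDPDefs.
Variables (S A : finType).

Definition policy := {ffun S -> A}.

Fixpoint exp_reward (M : mdp S A) (pi : policy) (t : nat) (s : S) : R :=
  match t with
  | 0 => reward M s (pi s)
  | t'.+1 => \sum_(s' : S) trans M s (pi s) s' * exp_reward M pi t' s'
  end.

Definition value_at (M : mdp S A) (pi : policy) (s : S) : R :=
  limn (series (fun t : nat => gamma M ^+ t * exp_reward M pi t s)).

Definition value (M : mdp S A) (pi : policy) : R := value_at M pi (init M).

Definition opt_value (M : mdp S A) : R := sup (range (value M)).

Definition is_optimal (M : mdp S A) (pi : policy) : bool :=
  [forall q : policy, [forall s : S, value_at M q s <= value_at M pi s]].

Definition lex_lt (f g : policy) : bool :=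
  [exists s : S, [forall s' : S, ltn (enum_rank s') (enum_rank s) ==> (f s' == g s')]
                 && ltn (enum_rank (f s)) (enum_rank (g s))].

Definition opt_policy (M : mdp S A) : option policy :=
  [pick pi | is_optimal M pi && [forall q : policy, is_optimal M q ==> ~~ lex_lt q pi]].

Definition value_of_opt (Mi Mj : mdp S A) : R :=
  if opt_policy Mj is Some p then value Mi p else 0.

Definition dV (Mi Mj : mdp S A) : R :=
  Num.max (opt_value Mi - value_of_opt Mi Mj) (opt_value Mj - value_of_opt Mj Mi).

End MDPDefs.

(* Main.v *)
Require Import Defs.
From HB Require Import structures.
From mathcomp Require Import all_boot all_order all_algebra.
From mathcomp Require Import all_classical all_reals all_analysis.
From mathcomp Require Import Rstruct Rstruct_topology.
From mathcomp Require Import lra.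
Import Order.TTheory GRing.Theory Num.Theory.
Local Open Scope ring_scope.

Local Open Scope classical_set_scope.
Lemma limn_near (u : nat -> R) (l : R) : (\forall n \near \oo, u n = l) -> limn u = l.
Proof.
move=> H.
have := @cvg_near_cst nat _ l u _ _ H.
move=> /(_ _)/cvg_lim -> //; exact: Rhausdorff.
Qed.

Lemma lex_irr (S A : finType) (p : policy S A) : ~~ lex_lt p p.
Proof.
apply/existsP => -[s /andP[_]].
by rewrite /ltn /= ltnn.
Qed.

Section Ex.
Variable f : bool -> R.

Lemma mk_ge0 : forall (s : unit) (a : bool) (s' : unit), (0:R) <= 1.
Proof. by []. Qed.
Lemma mk_sum1 : forall (s : unit) (a : bool), \sum_(s' : unit) (1:R) = 1.
Proof. by move=> _ _; rewrite big_const card_unit /= addr0. Qed.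

Definition mk : mdp unit bool :=
  @MDP unit bool (fun _ _ _ => 1) mk_ge0 mk_sum1 (fun _ a => f a) 0 (lexx 0) ltr01 tt.

Lemma value_at_mk pi s : value_at mk pi s = f (pi tt).
Proof.
rewrite /value_at /=.
apply: limn_near.
exists 1%N => // -[//|n] _.
rewrite /series /=.
rewrite big_nat_recl //= expr0 mul1r big1 ?addr0; last first.
  by move=> i _; rewrite exprS mul0r mul0r.
by case: s; case: pi.
Qed.

Lemma value_mk pi : value mk pi = f (pi tt).
Proof. exact: value_at_mk. Qed.

Lemma opt_value_mk b : (forall b', f b' <= f b) -> opt_value mk = f b.
Proof.
move=> H; rewrite /opt_value.
apply/eqP; rewrite eq_le; apply/andP; split.
  apply: ge_sup; first by exists (f b), [ffun _ => b] => //; rewrite value_mk ffunE.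
  by move=> _ [pi _ <-]; rewrite value_mk.
apply: ub_le_sup; last by exists [ffun _ => b]; rewrite // value_mk ffunE.
by exists (f b) => _ [pi _ <-]; rewrite value_mk.
Qed.

Lemma opt_policy_mk b : (forall b', b' != b -> f b' < f b) ->
  opt_policy mk = Some [ffun _ => b].
Proof.
move=> H.
have optE pi : is_optimal mk pi -> pi = [ffun _ => b].
  move/forallP/(_ [ffun _ => b])/forallP/(_ tt).
  rewrite !value_at_mk ffunE => Hle.
  apply/ffunP => -[]; rewrite ffunE.
  apply/eqP; apply/negPn/negP => /H Hlt.
  by move: (lt_le_trans Hlt Hle); rewrite ltxx.
have optb : is_optimal mk [ffun _ => b].
  apply/forallP => q; apply/forallP => s; rewrite !value_at_mk ffunE.
  by case: (eqVneq (q tt) b) => [->//|/H/ltW].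
rewrite /opt_policy; case: pickP.
  by move=> pi /andP[/optE -> _].
move/(_ [ffun _ => b]); rewrite optb /=.
move/negbT/negP; case; apply/forallP => q; apply/implyP => /optE ->.
exact: lex_irr.
Qed.
End Ex.

Definition r1 (a : bool) : R := if a then 2 else 0.
Definition r2 (a : bool) : R := if a then 1 else 0.
Definition r3 (a : bool) : R := if a then 0 else 1.

Theorem lemma5 :
  exists (S A : finType) (M1 M2 M3 : mdp S A),
    dV M1 M2 + dV M2 M3 < dV M1 M3.
Proof.
exists unit, bool, (mk r1), (mk r2), (mk r3).
have o1 : opt_policy (mk r1) = Some [ffun _ => true].
  by apply: opt_policy_mk; case => // _; rewrite /r1 ltr0n.
have o2 : opt_policy (mk r2) = Some [ffun _ => true].
  by apply: opt_policy_mk; case => // _; rewrite /r2 ltr01.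
have o3 : opt_policy (mk r3) = Some [ffun _ => false].
  by apply: opt_policy_mk; case => // _; rewrite /r3 ltr01.
have v1 : opt_value (mk r1) = r1 true.
  by apply: opt_value_mk; case; rewrite /r1 ?lexx ?ler0n.
have v2 : opt_value (mk r2) = r2 true.
  by apply: opt_value_mk; case; rewrite /r2 ?lexx ?ler01.
have v3 : opt_value (mk r3) = r3 false.
  by apply: opt_value_mk; case; rewrite /r3 ?lexx ?ler01.
rewrite /dV /value_of_opt o1 o2 o3 v1 v2 v3 !value_mk !ffunE.
rewrite /r1 /r2 /r3 !subrr !subr0 maxxx.
rewrite /Num.max; case: ifPn; case: ifPn; lra.
Qed.
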